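(* Let $C>0$. There exist $\epsilon_0>0$ and $q_0$, depending only on $C$ and $\Gamma$, such that for every prime $q\geq q_0$, every $0<h\leq1$, every $j\in\{1,\dots,2p\}$, every $z\in\mathcal D_j$, every $n\leq\epsilon_0(\log q+\log h^{-1})$ and all $\alpha,\beta\in\mathscr W_n^j$: if $\gamma_\alpha\equiv\gamma_\beta\bmod q$ and $|\gamma_\alpha(z)-\gamma_\beta(z)|\leq Ch$, then $\alpha=\beta$.
   Context: Schottky setup: $\Gamma\subset PSL_2(\mathbb Z)$ is a non-elementary convex co-compact subgroup realized as a Schottky group: there are open Euclidean discs $\mathcal D_1,\dots,\mathcal D_{2p}\subset\mathbb C$ with centers on $\mathbb R$ and pairwise disjoint closures, and matrices $\gamma_1,\dots,\gamma_p\in SL_2(\mathbb Z)$ acting as Möbius maps with $\gamma_i(\mathcal D_i)=\widehat{\mathbb C}\setminus\overline{\mathcal D_{p+i}}$; $\Gamma$ is the free group they generate. Put $\gamma_{p+i}=\gamma_i^{-1}$ (indices mod $2p$). Let $\mathscr W_n$ be the set of $\alpha=(\alpha_1,\dots,\alpha_n)\in\{1,\dots,2p\}^n$ with $\alpha_{i+1}\neq\alpha_i+p\pmod{2p}$ for all $i$, $\mathscr W_n^j=\{\alpha\in\mathscr W_n:\alpha_n\neq j\}$, and $\gamma_\alpha=\gamma_{\alpha_1}\cdots\gamma_{\alpha_n}$, viewed both as a matrix in $SL_2(\mathbb Z)$ and as a Möbius map. *)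

(* Defs.v *)
From Stdlib Require Import Reals ZArith Znumtheory List Lia.
Import ListNotations.
Open Scope R_scope.

Definition Cx := (R * R)%type.
Definition Cadd (z w : Cx) : Cx := (fst z + fst w, snd z + snd w).
Definition Cmul (z w : Cx) : Cx :=
  (fst z * fst w - snd z * snd w, fst z * snd w + snd z * fst w).
Definition Cinv (z : Cx) : Cx :=
  let n := fst z * fst z + snd z * snd z in (fst z / n, - snd z / n).
Definition Cdiv (z w : Cx) : Cx := Cmul z (Cinv w).
Definition Cofr (x : R) : Cx := (x, 0).
Definition Cabs (z : Cx) : R := sqrt (fst z * fst z + snd z * snd z).
Definition Cdist (z w : Cx) : R := Cabs (Cadd z (Cmul (Cofr (-1)) w)).

(* 2x2 integer matrices (a, b, c, d) = [[a, b], [c, d]]. *)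
Record mat := Mat { ma : Z; mb : Z; mc : Z; md : Z }.
Definition mmul (M N : mat) : mat :=
  Mat (ma M * ma N + mb M * mc N)%Z (ma M * mb N + mb M * md N)%Z
      (mc M * ma N + md M * mc N)%Z (mc M * mb N + md M * md N)%Z.
Definition mid : mat := Mat 1 0 0 1.
Definition mdet (M : mat) : Z := (ma M * md M - mb M * mc M)%Z.
(* inverse of an SL_2(Z) matrix *)
Definition minv (M : mat) : mat := Mat (md M) (- mb M)%Z (- mc M)%Z (ma M).

Definition mat_cong (q : Z) (M N : mat) : Prop :=
  (q | ma M - ma N)%Z /\ (q | mb M - mb N)%Z /\
  (q | mc M - mc N)%Z /\ (q | md M - md N)%Z.

(* Moebius action on C (used where the denominator is nonzero). *)
Definition mobC (M : mat) (z : Cx) : Cx :=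
  Cdiv (Cadd (Cmul (Cofr (IZR (ma M))) z) (Cofr (IZR (mb M))))
       (Cadd (Cmul (Cofr (IZR (mc M))) z) (Cofr (IZR (md M)))).

(* Riemann sphere: None = infinity. *)
Definition Chat := option Cx.
Definition mob (M : mat) (w : Chat) : Chat :=
  match w with
  | None => if Z.eq_dec (mc M) 0 then None
            else Some (Cofr (IZR (ma M) / IZR (mc M)))
  | Some z =>
      let den := Cadd (Cmul (Cofr (IZR (mc M))) z) (Cofr (IZR (md M))) in
      if (Req_EM_T (fst den) 0) then
        (if Req_EM_T (snd den) 0 then None else Some (mobC M z))
      else Some (mobC M z)
  end.

(* Discs with real centers cen k and radii rad k (indices k = 0 .. 2p-1). *)
Definition in_disc (cen rad : nat -> R) (k : nat) (z : Cx) : Prop :=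
  (fst z - cen k) ^ 2 + (snd z) ^ 2 < rad k ^ 2.
Definition in_cdisc (cen rad : nat -> R) (k : nat) (z : Cx) : Prop :=
  (fst z - cen k) ^ 2 + (snd z) ^ 2 <= rad k ^ 2.
Definition in_disc_hat cen rad k (w : Chat) : Prop :=
  match w with None => False | Some z => in_disc cen rad k z end.
Definition in_cdisc_hat cen rad k (w : Chat) : Prop :=
  match w with None => False | Some z => in_cdisc cen rad k z end.

(* Generators, 0-based: gen k = gam k for k < p, gen (p+i) = (gam i)^{-1}. *)
Definition gen (p : nat) (gam : nat -> mat) (k : nat) : mat :=
  if Nat.ltb k p then gam k else minv (gam (k - p)%nat).

Definition schottky (p : nat) (gam : nat -> mat) (cen rad : nat -> R) : Prop :=
  (2 <= p)%nat /\
  (forall i, (i < p)%nat -> mdet (gam i) = 1%Z) /\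
  (forall k, (k < 2 * p)%nat -> 0 < rad k) /\
  (forall k l, (k < 2 * p)%nat -> (l < 2 * p)%nat -> k <> l ->
     rad k + rad l < Rabs (cen k - cen l)) /\
  (forall i, (i < p)%nat -> forall w : Chat,
     in_disc_hat cen rad i w <-> ~ in_cdisc_hat cen rad (p + i) (mob (gam i) w)).

(* Reduced words of length n (0-based letters). *)
Definition is_word (p n : nat) (a : list nat) : Prop :=
  length a = n /\ Forall (fun k => (k < 2 * p)%nat) a /\
  (forall i, (S i < n)%nat -> nth (S i) a 0%nat <> ((nth i a 0%nat + p) mod (2 * p))%nat).

Definition is_word_j (p n j : nat) (a : list nat) : Prop :=
  is_word p n a /\ (n = 0%nat \/ nth (n - 1) a 0%nat <> j).

Definition gword (p : nat) (gam : nat -> mat) (a : list nat) : mat :=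
  fold_right (fun k M => mmul (gen p gam k) M) mid a.

(* Main.v *)
Require Import Defs.
From Stdlib Require Import Reals ZArith Znumtheory List Lia Lra Psatz Classical.
From Coquelicot Require Import Coquelicot.
Open Scope R_scope.

Definition num (M : mat) (z : C) : C := (RtoC (IZR (ma M)) * z + RtoC (IZR (mb M)))%C.
Definition den (M : mat) (z : C) : C := (RtoC (IZR (mc M)) * z + RtoC (IZR (md M)))%C.

Lemma Cinv_eq (z : C) : Defs.Cinv z = Complex.Cinv z.
Proof. unfold Defs.Cinv, Complex.Cinv. simpl. f_equal; f_equal; ring. Qed.

Lemma mobC_eq M z : mobC M z = (num M z / den M z)%C.
Proof. unfold mobC, Defs.Cdiv. rewrite Cinv_eq. reflexivity. Qed.

Lemma Cdist_eq u v : Cdist u v = Cmod (u - v)%C.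
Proof.
  unfold Cdist, Cabs, Cmod. destruct u as [a b], v as [c d]. simpl.
  f_equal. ring.
Qed.

Lemma IZR_C_plus a b : RtoC (IZR (a + b)) = (RtoC (IZR a) + RtoC (IZR b))%C.
Proof. rewrite plus_IZR. apply RtoC_plus. Qed.
Lemma IZR_C_mult a b : RtoC (IZR (a * b)) = (RtoC (IZR a) * RtoC (IZR b))%C.
Proof. rewrite mult_IZR. apply RtoC_mult. Qed.
Lemma IZR_C_opp a : RtoC (IZR (- a)) = (- RtoC (IZR a))%C.
Proof. rewrite opp_IZR. apply RtoC_opp. Qed.

Lemma den_comp M N z : den N z <> 0%C ->
  den (mmul M N) z = (den M (mobC N z) * den N z)%C.
Proof.
  intros H. rewrite mobC_eq. unfold den, num, mmul; simpl.
  rewrite !IZR_C_plus, !IZR_C_mult. unfold den in H. field. exact H.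
Qed.

Lemma mobC_comp M N z : den N z <> 0%C -> den M (mobC N z) <> 0%C ->
  mobC (mmul M N) z = mobC M (mobC N z).
Proof.
  intros H1 H2. rewrite (mobC_eq (mmul M N)).
  rewrite den_comp by exact H1.
  rewrite (mobC_eq M). revert H2. rewrite mobC_eq. unfold den, num, mmul; simpl.
  rewrite !IZR_C_plus, !IZR_C_mult. intros H2. unfold den in H1. match goal with |- ?a = ?b => change (@eq C a b) end. field. split; [exact H1|].
  match goal with |- ?e <> _ => replace e with
   ((IZR (mc M) * ((IZR (ma N) * z + IZR (mb N)) / (IZR (mc N) * z + IZR (md N))) + IZR (md M)) * (IZR (mc N) * z + IZR (md N)))%C
   by (field; exact H1) end.
  apply Cmult_neq_0; assumption.
Qed.

Lemma C_split (z : C) : z = (fst z, snd z).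
Proof. destruct z; reflexivity. Qed.

Lemma mob_Some M z y : mob M (Some z) = Some y -> den M z <> 0%C /\ y = mobC M z.
Proof.
  unfold mob. cbv zeta.
  destruct Req_EM_T as [e1|e1]; [destruct Req_EM_T as [e2|e2]|]; intro H; try discriminate;
  inversion H; subst; split; auto; intro E;
  [apply e2 | apply e1]; change (Cadd (Cmul (Cofr (IZR (mc M))) z) (Cofr (IZR (md M)))) with (den M z);
  rewrite E; reflexivity.
Qed.

Lemma mob_den0 M z : den M z = 0%C -> mob M (Some z) = None.
Proof.
  intro E. unfold mob. cbv zeta.
  change (Cadd (Cmul (Cofr (IZR (mc M))) z) (Cofr (IZR (md M)))) with (den M z).
  rewrite E. simpl. destruct (Req_dec_T 0 0) as [e1|e1]; [|lra].
  reflexivity.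
Qed.

Lemma mob_Some_of M z : den M z <> 0%C -> mob M (Some z) = Some (mobC M z).
Proof.
  intro E. unfold mob. cbv zeta.
  change (Cadd (Cmul (Cofr (IZR (mc M))) z) (Cofr (IZR (md M)))) with (den M z).
  destruct Req_EM_T as [e1|e1]; [|reflexivity].
  destruct Req_EM_T as [e2|e2]; [|reflexivity].
  exfalso. apply E. rewrite (C_split (den M z)). rewrite e1, e2. reflexivity.
Qed.

Lemma mmul_assoc A B D : mmul A (mmul B D) = mmul (mmul A B) D.
Proof. destruct A as [a1 b1 c1 d1], B as [a2 b2 c2 d2], D as [a3 b3 c3 d3]; unfold mmul; simpl; f_equal; ring. Qed.

Lemma mmul_mid_l A : mmul mid A = A.
Proof. destruct A as [a1 b1 c1 d1]; unfold mmul, mid; cbn [ma mb mc md]; f_equal; ring. Qed.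

Lemma mmul_mid_r A : mmul A mid = A.
Proof. destruct A as [a1 b1 c1 d1]; unfold mmul, mid; cbn [ma mb mc md]; f_equal; ring. Qed.

Lemma mdet_mul A B : mdet (mmul A B) = (mdet A * mdet B)%Z.
Proof. destruct A as [a1 b1 c1 d1], B as [a2 b2 c2 d2]; unfold mdet, mmul; simpl; ring. Qed.

Lemma mmul_minv g : mdet g = 1%Z -> mmul g (minv g) = mid.
Proof. destruct g as [a1 b1 c1 d1]; unfold mdet, mmul, minv, mid; simpl; intro H; f_equal; nia. Qed.

Lemma mdet_minv g : mdet (minv g) = mdet g.
Proof. destruct g as [a1 b1 c1 d1]; unfold mdet, minv; simpl; ring. Qed.

Lemma den_mid x : den mid x = 1%C.
Proof. unfold den, mid; simpl. apply injective_projections; simpl; ring. Qed.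

Lemma mobC_mid x : mobC mid x = x.
Proof.
  rewrite mobC_eq, den_mid. unfold num, mid; simpl.
  apply injective_projections; simpl; field.
Qed.

Lemma mob_inv g x : mdet g = 1%Z -> mob g (mob (minv g) (Some x)) = Some x.
Proof.
  intro Hd.
  destruct (Ceq_dec (den (minv g) x) 0%C) as [E|E].
  - rewrite mob_den0 by exact E. simpl.
    destruct g as [a b c d]. unfold mdet in Hd; simpl in *.
    unfold den in E; simpl in E.
    assert (E1 := f_equal fst E). assert (E2 := f_equal snd E). simpl in E1, E2.
    destruct (Z.eq_dec c 0) as [Hc|Hc].
    + subst c. exfalso. rewrite opp_IZR in E1. assert (IZR a = 0) by lra.
      apply eq_IZR in H. subst a. lia.
    + assert (Hc' : IZR c <> 0) by (apply not_0_IZR; exact Hc).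
      rewrite opp_IZR in E1, E2. f_equal. unfold Cofr. rewrite (C_split x).
      f_equal; [field_simplify_eq; lra | nra].
  - rewrite mob_Some_of by exact E.
    assert (H1 := den_comp g (minv g) x E). rewrite mmul_minv, den_mid in H1 by exact Hd.
    assert (H2 : den g (mobC (minv g) x) <> 0%C).
    { intro Z0. rewrite Z0, Cmult_0_l in H1. apply C1_nz. exact H1. }
    rewrite mob_Some_of by exact H2. f_equal.
    rewrite <- mobC_comp by assumption. rewrite mmul_minv by exact Hd. apply mobC_mid.
Qed.

Lemma modp_lo p b : (b < p)%nat -> ((b + p) mod (2 * p) = b + p)%nat.
Proof. intro. apply Nat.mod_small. lia. Qed.

Lemma modp_hi p b : (p <= b < 2 * p)%nat -> ((b + p) mod (2 * p) = b - p)%nat.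
Proof. intro. symmetry. apply (Nat.mod_unique _ _ 1); lia. Qed.

Lemma modp_cases p b : (b < 2 * p)%nat ->
  ((b < p /\ (b + p) mod (2 * p) = b + p) \/ (p <= b /\ (b + p) mod (2 * p) = b - p))%nat.
Proof.
  intro H. destruct (Nat.lt_ge_cases b p).
  - left. split; [lia|]. apply modp_lo; lia.
  - right. split; [lia|]. apply modp_hi; lia.
Qed.

Lemma modp_sym p a b : (a < 2 * p)%nat -> (b < 2 * p)%nat ->
  a = ((b + p) mod (2 * p))%nat -> b = ((a + p) mod (2 * p))%nat.
Proof.
  intros Ha Hb E. destruct (modp_cases p a Ha) as [[? E1]|[? E1]];
  destruct (modp_cases p b Hb) as [[? E2]|[? E2]]; lia.
Qed.

Lemma modp_inj p a b : (a < 2 * p)%nat -> (b < 2 * p)%nat ->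
  ((a + p) mod (2 * p))%nat = ((b + p) mod (2 * p))%nat -> a = b.
Proof.
  intros Ha Hb E. destruct (modp_cases p a Ha) as [[? E1]|[? E1]];
  destruct (modp_cases p b Hb) as [[? E2]|[? E2]]; lia.
Qed.

Lemma modp_lt p b : (0 < p)%nat -> ((b + p) mod (2 * p) < 2 * p)%nat.
Proof. intro. apply Nat.mod_upper_bound. lia. Qed.

Lemma sq_abs a r : 0 < r -> a ^ 2 <= r ^ 2 -> Rabs a <= r.
Proof. intros Hr H. unfold Rabs. destruct (Rcase_abs a); nra. Qed.

Lemma cdisc_abs (cen rad : nat -> R) k x : 0 < rad k -> in_cdisc cen rad k x ->
  Rabs (fst x - cen k) <= rad k /\ Rabs (snd x) <= rad k.
Proof.
  unfold in_cdisc. intros Hr H.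
  assert (0 <= snd x ^ 2) by (apply pow2_ge_0).
  assert (0 <= (fst x - cen k) ^ 2) by (apply pow2_ge_0).
  split; apply sq_abs; lra.
Qed.

Lemma cdisc_sep (cen rad : nat -> R) k l x y : 0 < rad k -> 0 < rad l ->
  in_cdisc cen rad k x -> in_cdisc cen rad l y ->
  Rabs (cen k - cen l) - rad k - rad l <= Rabs (fst x - fst y).
Proof.
  intros Hk Hl Hx Hy. destruct (cdisc_abs cen rad k x Hk Hx) as [A _].
  destruct (cdisc_abs cen rad l y Hl Hy) as [B _].
  revert A B. unfold Rabs. repeat destruct Rcase_abs; lra.
Qed.

Definition sch_sep (p : nat) (cen rad : nat -> R) :=
  (forall k, (k < 2 * p)%nat -> 0 < rad k) /\
  (forall k l, (k < 2 * p)%nat -> (l < 2 * p)%nat -> k <> l ->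
     rad k + rad l < Rabs (cen k - cen l)).

Lemma cdisc_disj p cen rad k l x : sch_sep p cen rad ->
  (k < 2 * p)%nat -> (l < 2 * p)%nat -> k <> l ->
  in_cdisc cen rad k x -> in_cdisc cen rad l x -> False.
Proof.
  intros [Hr Hs] Hk Hl Hkl A B.
  assert (H := cdisc_sep cen rad k l x x (Hr k Hk) (Hr l Hl) A B).
  assert (H2 := Hs k l Hk Hl Hkl). rewrite Rminus_diag, Rabs_R0 in H. lra.
Qed.

Lemma step p gam cen rad : schottky p gam cen rad -> forall k l z,
  (k < 2 * p)%nat -> (l < 2 * p)%nat -> k <> l -> in_cdisc cen rad l z ->
  den (gen p gam k) z <> 0%C /\
  in_cdisc cen rad ((k + p) mod (2 * p)) (mobC (gen p gam k) z).
Proof.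
  intros HS k l z Hk Hl Hkl Hz.
  destruct HS as (Hp & Hdet & Hrad & Hsep & Hmap).
  assert (SS : sch_sep p cen rad) by (split; assumption).
  unfold gen. destruct (Nat.ltb_spec k p) as [Hkp|Hkp].
  - rewrite modp_lo by exact Hkp.
    assert (Hn : ~ in_disc cen rad k z).
    { intro D. apply (cdisc_disj p cen rad k l z SS Hk Hl Hkl); [|exact Hz].
      unfold in_disc, in_cdisc in *. lra. }
    assert (H := Hmap k Hkp (Some z)). simpl in H.
    assert (H2 : in_cdisc_hat cen rad (p + k) (mob (gam k) (Some z))).
    { apply NNPP. intro N. apply Hn. apply H. exact N. }
    destruct (mob (gam k) (Some z)) as [y|] eqn:E; [|contradiction].
    apply mob_Some in E. destruct E as [E1 E2]. subst y. split; [exact E1|].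
    rewrite Nat.add_comm. exact H2.
  - rewrite modp_hi by lia. set (i := (k - p)%nat).
    assert (Hi : (i < p)%nat) by (unfold i; lia).
    assert (Hk' : (p + i)%nat = k) by (unfold i; lia).
    assert (H := Hmap i Hi (mob (minv (gam i)) (Some z))).
    rewrite mob_inv in H by (apply Hdet; exact Hi). rewrite Hk' in H.
    assert (Hn : ~ in_cdisc cen rad k z).
    { intro D. apply (cdisc_disj p cen rad k l z SS Hk Hl Hkl D Hz). }
    apply H in Hn. revert Hn.
    destruct (mob (minv (gam i)) (Some z)) as [y|] eqn:E; intro Hn; [|simpl in Hn; contradiction].
    apply mob_Some in E. destruct E as [E1 E2]. subst y. split; [exact E1|].
    unfold in_disc_hat, in_disc, in_cdisc in *. lra.
Qed.

Definition redw (p : nat) (w : list nat) : Prop :=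
  List.Forall (fun k => (k < 2 * p)%nat) w /\
  (forall i, (S i < length w)%nat -> nth (S i) w 0%nat <> ((nth i w 0%nat + p) mod (2 * p))%nat).

Lemma redw_tail p a w : redw p (a :: w) -> redw p w.
Proof.
  intros [H1 H2]. split.
  - inversion H1; assumption.
  - intros i Hi. apply (H2 (S i)). simpl. lia.
Qed.

Lemma pingpong p gam cen rad : schottky p gam cen rad -> forall w a l z,
  redw p (a :: w) -> (l < 2 * p)%nat -> nth (length w) (a :: w) 0%nat <> l ->
  in_cdisc cen rad l z ->
  den (gword p gam (a :: w)) z <> 0%C /\
  in_cdisc cen rad ((a + p) mod (2 * p)) (mobC (gword p gam (a :: w)) z).
Proof.
  intros HS. assert (Hp : (0 < p)%nat) by (destruct HS; lia).
  induction w as [|b w IH]; intros a l z Hr Hl Hn Hz.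
  - simpl. rewrite mmul_mid_r. simpl in Hn.
    destruct Hr as [Hf _]. inversion Hf; subst.
    apply (step p gam cen rad HS a l z); assumption.
  - assert (Hr' := redw_tail p a (b :: w) Hr).
    destruct (IH b l z Hr' Hl Hn Hz) as [D1 I1].
    destruct Hr as [Hf Hrr]. inversion Hf as [|? ? Ha Hf']; subst. inversion Hf'; subst.
    assert (Hab : a <> ((b + p) mod (2 * p))%nat).
    { intro E. apply (Hrr 0%nat); [simpl; lia|]. simpl. apply modp_sym; auto. }
    destruct (step p gam cen rad HS a ((b + p) mod (2 * p)) _ Ha (modp_lt p b Hp) Hab I1)
      as [D2 I2].
    change (gword p gam (a :: b :: w)) with (mmul (gen p gam a) (gword p gam (b :: w))).
    split.
    + rewrite den_comp by exact D1. apply Cmult_neq_0; assumption.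
    + rewrite mobC_comp by assumption. exact I2.
Qed.

Lemma gword_app p gam s t : gword p gam (s ++ t) = mmul (gword p gam s) (gword p gam t).
Proof.
  induction s as [|a s IH]; simpl.
  - rewrite mmul_mid_l. reflexivity.
  - rewrite IH, mmul_assoc. reflexivity.
Qed.

Lemma mdet_gen p gam k : (forall i, (i < p)%nat -> mdet (gam i) = 1%Z) -> (k < 2 * p)%nat ->
  mdet (gen p gam k) = 1%Z.
Proof.
  intros Hd Hk. unfold gen. destruct (Nat.ltb_spec k p).
  - apply Hd; assumption.
  - rewrite mdet_minv. apply Hd. lia.
Qed.

Lemma mdet_gword p gam w : (forall i, (i < p)%nat -> mdet (gam i) = 1%Z) ->
  List.Forall (fun k => (k < 2 * p)%nat) w -> mdet (gword p gam w) = 1%Z.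
Proof.
  intros Hd Hf. induction Hf as [|a w Ha Hf IH]; simpl.
  - reflexivity.
  - rewrite mdet_mul, IH, (mdet_gen p gam a Hd Ha). reflexivity.
Qed.

Lemma diff_decomp (a b : list nat) : length a = length b -> a <> b ->
  exists s x y a' b', a = s ++ x :: a' /\ b = s ++ y :: b' /\ x <> y /\ length a' = length b'.
Proof.
  revert b. induction a as [|x a IH]; intros [|y b] Hl Hne; simpl in Hl; try discriminate.
  - exfalso. apply Hne. reflexivity.
  - destruct (Nat.eq_dec x y) as [E|E].
    + subst y. assert (Hne' : a <> b) by (intro F; apply Hne; subst; reflexivity).
      destruct (IH b ltac:(lia) Hne') as (s & x' & y' & a' & b' & E1 & E2 & E3 & E4).
      exists (x :: s), x', y', a', b'. subst. repeat split; auto.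
    + exists nil, x, y, a, b. repeat split; auto.
Qed.

Lemma redw_app p s t : redw p (s ++ t) -> redw p t.
Proof.
  induction s as [|a s IH]; simpl; intro H; [exact H|].
  apply IH. apply (redw_tail p a). exact H.
Qed.

Lemma mobC_diff M X Y : mdet M = 1%Z -> den M X <> 0%C -> den M Y <> 0%C ->
  (mobC M X - mobC M Y)%C = ((X - Y) / (den M X * den M Y))%C.
Proof.
  intros Hd HX HY. rewrite !mobC_eq.
  assert (E : (RtoC (IZR (ma M)) * RtoC (IZR (md M)) - RtoC (IZR (mb M)) * RtoC (IZR (mc M)))%C = 1%C).
  { rewrite <- !RtoC_mult, <- RtoC_minus, <- !mult_IZR, <- minus_IZR.
    unfold mdet in Hd. rewrite Hd. reflexivity. }
  unfold num. unfold den in *.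
  transitivity (((RtoC (IZR (ma M)) * RtoC (IZR (md M)) - RtoC (IZR (mb M)) * RtoC (IZR (mc M))) * (X - Y)) /
     ((RtoC (IZR (mc M)) * X + RtoC (IZR (md M))) * (RtoC (IZR (mc M)) * Y + RtoC (IZR (md M)))))%C.
  - field. split; assumption.
  - rewrite E. rewrite Cmult_1_l. reflexivity.
Qed.

Lemma Cmod_den M X : Cmod (den M X) <= Rabs (IZR (mc M)) * Cmod X + Rabs (IZR (md M)).
Proof.
  unfold den. eapply Rle_trans; [apply Cmod_triangle|].
  rewrite Cmod_mult, !Cmod_R. lra.
Qed.

Definition bnd (K : Z) (M : mat) : Prop :=
  (Z.abs (ma M) <= K /\ Z.abs (mb M) <= K /\ Z.abs (mc M) <= K /\ Z.abs (md M) <= K)%Z.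

Lemma abs2 x1 y1 x2 y2 K1 K2 : (Z.abs x1 <= K1)%Z -> (Z.abs x2 <= K1)%Z ->
  (Z.abs y1 <= K2)%Z -> (Z.abs y2 <= K2)%Z -> (Z.abs (x1 * y1 + x2 * y2) <= 2 * K1 * K2)%Z.
Proof.
  intros. eapply Z.le_trans; [apply Z.abs_triangle|]. rewrite !Z.abs_mul.
  assert (0 <= Z.abs x1)%Z by apply Z.abs_nonneg. assert (0 <= Z.abs x2)%Z by apply Z.abs_nonneg.
  assert (0 <= Z.abs y1)%Z by apply Z.abs_nonneg. assert (0 <= Z.abs y2)%Z by apply Z.abs_nonneg.
  assert (Z.abs x1 * Z.abs y1 <= K1 * K2)%Z by (apply Z.mul_le_mono_nonneg; lia).
  assert (Z.abs x2 * Z.abs y2 <= K1 * K2)%Z by (apply Z.mul_le_mono_nonneg; lia).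
  lia.
Qed.

Lemma bnd_mul K1 K2 M N : bnd K1 M -> bnd K2 N -> bnd (2 * K1 * K2) (mmul M N).
Proof.
  intros (A1 & B1 & C1 & D1) (A2 & B2 & C2 & D2). unfold mmul, bnd; cbn [ma mb mc md].
  repeat split; apply abs2; assumption.
Qed.

Lemma gword_bnd p gam K w : (1 <= K)%Z -> (forall k, (k < 2 * p)%nat -> bnd K (gen p gam k)) ->
  List.Forall (fun k => (k < 2 * p)%nat) w ->
  bnd ((2 * K) ^ Z.of_nat (length w)) (gword p gam w).
Proof.
  intros HK Hg Hf. induction Hf as [|a w Ha Hf IH].
  - unfold bnd, mid; simpl. lia.
  - change (gword p gam (a :: w)) with (mmul (gen p gam a) (gword p gam w)).
    change (length (a :: w)) with (S (length w)).
    rewrite Nat2Z.inj_succ, Z.pow_succ_r by lia.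
    replace (2 * K * (2 * K) ^ Z.of_nat (length w))%Z with (2 * K * (2 * K) ^ Z.of_nat (length w))%Z by ring.
    apply bnd_mul; auto.
Qed.

Lemma gen_bnd p gam : exists K, (1 <= K)%Z /\ forall k, (k < 2 * p)%nat -> bnd K (gen p gam k).
Proof.
  generalize (2 * p)%nat as N. induction N as [|N [K [HK H]]].
  - exists 1%Z. split; [lia|]. intros; lia.
  - set (M := gen p gam N).
    exists (Z.max K (Z.max (Z.max (Z.abs (ma M)) (Z.abs (mb M))) (Z.max (Z.abs (mc M)) (Z.abs (md M))))).
    split; [lia|]. intros k Hk.
    destruct (Nat.eq_dec k N) as [->|Hne].
    + unfold bnd. fold M. lia.
    + destruct (H k ltac:(lia)) as (A & B & C' & D). unfold bnd. lia.
Qed.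

Lemma finite_max (N : nat) (P : nat -> R -> Prop) :
  (forall k M M', P k M -> M <= M' -> P k M') ->
  (forall k, (k < N)%nat -> exists M, P k M) -> exists M, forall k, (k < N)%nat -> P k M.
Proof.
  intros Hmono. induction N as [|N IH]; intros H.
  - exists 0. intros; lia.
  - destruct IH as [M1 H1]. { intros k Hk. apply H. lia. }
    destruct (H N ltac:(lia)) as [M2 H2].
    exists (Rmax M1 M2). intros k Hk. destruct (Nat.eq_dec k N) as [->|Hne].
    + apply (Hmono _ M2); [exact H2|apply Rmax_r].
    + apply (Hmono _ M1); [apply H1; lia|apply Rmax_l].
Qed.

Lemma sqrt2_le2 : sqrt 2 <= 2.
Proof.
  rewrite <- (sqrt_pow2 2) at 2 by lra. apply sqrt_le_1_alt. lra.
Qed.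

Lemma Cmod_cdisc (cen rad : nat -> R) k X : 0 < rad k -> in_cdisc cen rad k X ->
  Cmod X <= 2 * (Rabs (cen k) + rad k).
Proof.
  intros Hr H. destruct (cdisc_abs cen rad k X Hr H) as [A B].
  eapply Rle_trans; [apply Cmod_2Rmax|].
  assert (Rabs (fst X) <= Rabs (cen k) + rad k).
  { replace (fst X) with ((fst X - cen k) + cen k) by ring.
    eapply Rle_trans; [apply Rabs_triang|]. lra. }
  assert (Rmax (Rabs (fst X)) (Rabs (snd X)) <= Rabs (cen k) + rad k).
  { apply Rmax_lub; [assumption|]. assert (0 <= Rabs (cen k)) by apply Rabs_pos. lra. }
  assert (0 <= Rmax (Rabs (fst X)) (Rabs (snd X))).
  { eapply Rle_trans; [apply Rabs_pos|apply Rmax_l]. }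
  assert (H3 := sqrt2_le2). assert (0 <= sqrt 2) by apply sqrt_pos. nra.
Qed.

Lemma pingpong' p gam cen rad : schottky p gam cen rad -> forall w l z,
  w <> nil -> redw p w -> (l < 2 * p)%nat -> nth (length w - 1) w 0%nat <> l ->
  in_cdisc cen rad l z ->
  den (gword p gam w) z <> 0%C /\
  in_cdisc cen rad ((hd 0%nat w + p) mod (2 * p)) (mobC (gword p gam w) z).
Proof.
  intros HS [|a w] l z Hne Hr Hl Hn Hz; [contradiction|].
  simpl in Hn. rewrite Nat.sub_0_r in Hn. simpl. apply (pingpong p gam cen rad HS w a l z); assumption.
Qed.

Lemma nth_last_app (s t : list nat) : t <> nil ->
  nth (length (s ++ t) - 1) (s ++ t) 0%nat = nth (length t - 1) t 0%nat.
Proof.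
  intro H. destruct t as [|a t]; [contradiction|].
  rewrite length_app. replace (length s + length (a :: t) - 1)%nat with (length s + (length (a :: t) - 1))%nat
    by (simpl; lia).
  apply app_nth2_plus.
Qed.

Lemma is_word_redw p n a : is_word p n a -> redw p a.
Proof. intros (H1 & H2 & H3). split; [exact H2|]. intros i Hi. apply H3. lia. Qed.

Lemma lower p gam cen rad (HS : schottky p gam cen rad) (dl R1 : R) (K : Z)
  (Hdl : 0 < dl)
  (Hsep : forall k l, (k < 2 * p)%nat -> (l < 2 * p)%nat -> k <> l ->
     dl <= Rabs (cen k - cen l) - rad k - rad l)
  (HR1 : 0 <= R1) (HR : forall k, (k < 2 * p)%nat -> 2 * (Rabs (cen k) + rad k) <= R1)
  (HK : (1 <= K)%Z) (Hg : forall k, (k < 2 * p)%nat -> bnd K (gen p gam k))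
  (n j : nat) (z : C) (Hj : (j < 2 * p)%nat) (Hz : in_disc cen rad j z)
  (a b : list nat) (Ha : is_word_j p n j a) (Hb : is_word_j p n j b) (Hab : a <> b) :
  dl / ((IZR (2 * K) ^ n * (R1 + 1)) ^ 2) <=
  Cmod (mobC (gword p gam a) z - mobC (gword p gam b) z)%C.
Proof.
  assert (Hp : (0 < p)%nat) by (destruct HS; lia).
  pose proof HS as (Hp2 & Hdet & Hrad & Hsep0 & Hmap).
  destruct Ha as [Wa La], Hb as [Wb Lb].
  assert (Hlen : length a = length b) by (destruct Wa, Wb; lia).
  destruct (diff_decomp a b Hlen Hab) as (s & x & y & a' & b' & Ea & Eb & Hxy & Hl').
  assert (Hra := is_word_redw p n a Wa). assert (Hrb := is_word_redw p n b Wb).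
  assert (Hna : length a = n) by (destruct Wa; lia).
  assert (Hzc : in_cdisc cen rad j z) by (unfold in_disc, in_cdisc in *; lra).
  assert (Ln : nth (n - 1) a 0%nat <> j).
  { destruct La as [La|La]; [|exact La]. rewrite Ea, length_app in Hna. simpl in Hna. lia. }
  assert (Lnb : nth (n - 1) b 0%nat <> j).
  { destruct Lb as [Lb|Lb]; [|exact Lb]. rewrite Hlen, Eb, length_app in Hna. simpl in Hna. lia. }
  assert (Pa : den (gword p gam a) z <> 0%C).
  { apply (pingpong' p gam cen rad HS a j z); auto. subst a; destruct s; discriminate.
    rewrite Hna; exact Ln. }
  assert (Pb : den (gword p gam b) z <> 0%C).
  { apply (pingpong' p gam cen rad HS b j z); auto. subst b; destruct s; discriminate.
    rewrite <- Hlen, Hna; exact Lnb. }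
  assert (Sa := pingpong' p gam cen rad HS (x :: a') j z ltac:(discriminate)
     (redw_app p s _ ltac:(rewrite <- Ea; exact Hra)) Hj).
  assert (Sb := pingpong' p gam cen rad HS (y :: b') j z ltac:(discriminate)
     (redw_app p s _ ltac:(rewrite <- Eb; exact Hrb)) Hj).
  rewrite <- (nth_last_app s) in Sa by discriminate.
  rewrite <- (nth_last_app s) in Sb by discriminate.
  rewrite <- Ea, Hna in Sa. rewrite <- Eb, <- Hlen, Hna in Sb.
  destruct (Sa Ln Hzc) as [Da Ia]. destruct (Sb Lnb Hzc) as [Db Ib]. clear Sa Sb.
  simpl in Ia, Ib.
  set (X := mobC (gword p gam (x :: a')) z) in *.
  set (Y := mobC (gword p gam (y :: b')) z) in *.
  set (S := gword p gam s).
  assert (Ga : gword p gam a = mmul S (gword p gam (x :: a'))) by (rewrite Ea; apply gword_app).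
  assert (Gb : gword p gam b = mmul S (gword p gam (y :: b'))) by (rewrite Eb; apply gword_app).
  assert (DX : den S X <> 0%C).
  { intro E. apply Pa. rewrite Ga, den_comp by exact Da. fold X. rewrite E. apply Cmult_0_l. }
  assert (DY : den S Y <> 0%C).
  { intro E. apply Pb. rewrite Gb, den_comp by exact Db. fold Y. rewrite E. apply Cmult_0_l. }
  rewrite Ga, Gb, !mobC_comp by assumption. fold X Y.
  assert (Fs : List.Forall (fun k => (k < 2 * p)%nat) s).
  { destruct Hra as [Fa _]. rewrite Ea in Fa. apply Forall_app in Fa. tauto. }
  rewrite mobC_diff by (try assumption; apply mdet_gword; assumption).
  rewrite Cmod_div by (apply Cmult_neq_0; assumption). rewrite Cmod_mult.
  assert (Hx2 : (x < 2 * p)%nat).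
  { destruct Hra as [Fa _]. rewrite Ea in Fa. apply Forall_app in Fa. destruct Fa as [_ F].
    inversion F; assumption. }
  assert (Hy2 : (y < 2 * p)%nat).
  { destruct Hrb as [Fb _]. rewrite Eb in Fb. apply Forall_app in Fb. destruct Fb as [_ F].
    inversion F; assumption. }
  set (kx := ((x + p) mod (2 * p))%nat) in *. set (ky := ((y + p) mod (2 * p))%nat) in *.
  assert (Hkx : (kx < 2 * p)%nat) by (apply modp_lt; exact Hp).
  assert (Hky : (ky < 2 * p)%nat) by (apply modp_lt; exact Hp).
  assert (Hk : kx <> ky) by (intro E; apply Hxy; apply (modp_inj p); assumption).
  assert (Num : dl <= Cmod (X - Y)%C).
  { eapply Rle_trans; [apply (Hsep kx ky Hkx Hky Hk)|].
    eapply Rle_trans; [apply (cdisc_sep cen rad kx ky X Y); auto|].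
    apply (re_le_Cmod (X - Y)%C). }
  set (Q := IZR (2 * K) ^ n * (R1 + 1)).
  assert (HB : 1 <= IZR (2 * K) ^ n) by (apply pow_R1_Rle; apply IZR_le; lia).
  assert (Hcd : Rabs (IZR (mc S)) <= IZR (2 * K) ^ n /\ Rabs (IZR (md S)) <= IZR (2 * K) ^ n).
  { destruct (gword_bnd p gam K s HK Hg Fs) as (_ & _ & C1 & D1). fold S in C1, D1.
    assert (Hm : ((2 * K) ^ Z.of_nat (length s) <= (2 * K) ^ Z.of_nat n)%Z).
    { apply Z.pow_le_mono_r; [lia|]. rewrite <- Hna, Ea, length_app. lia. }
    rewrite pow_IZR, <- !abs_IZR. split; apply IZR_le; lia. }
  assert (BX : Cmod (den S X) <= Q).
  { eapply Rle_trans; [apply Cmod_den|].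
    assert (Cmod X <= R1) by (eapply Rle_trans; [apply (Cmod_cdisc cen rad kx X); auto|apply HR; auto]).
    assert (0 <= Cmod X) by apply Cmod_ge_0. unfold Q.
    assert (0 <= Rabs (IZR (mc S))) by apply Rabs_pos. nra. }
  assert (BY : Cmod (den S Y) <= Q).
  { eapply Rle_trans; [apply Cmod_den|].
    assert (Cmod Y <= R1) by (eapply Rle_trans; [apply (Cmod_cdisc cen rad ky Y); auto|apply HR; auto]).
    assert (0 <= Cmod Y) by apply Cmod_ge_0. unfold Q.
    assert (0 <= Rabs (IZR (mc S))) by apply Rabs_pos. nra. }
  assert (PX : 0 < Cmod (den S X)) by (apply Cmod_gt_0; exact DX).
  assert (PY : 0 < Cmod (den S Y)) by (apply Cmod_gt_0; exact DY).
  apply Rle_trans with (dl / (Cmod (den S X) * Cmod (den S Y))).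
  - unfold Rdiv. apply Rmult_le_compat_l; [lra|]. apply Rinv_le_contravar.
    + apply Rmult_lt_0_compat; assumption.
    + simpl. rewrite Rmult_1_r. apply Rmult_le_compat; lra.
  - unfold Rdiv. apply Rmult_le_compat_r; [|exact Num].
    left. apply Rinv_0_lt_compat. apply Rmult_lt_0_compat; assumption.
Qed.

Lemma div_le_mul a b c : 0 < b -> a / b <= c -> a <= c * b.
Proof. intros Hb H. replace a with (a / b * b) by (field; lra). apply Rmult_le_compat_r; lra. Qed.

Lemma mul_le_div a b c : 0 < b -> a <= c * b -> a / b <= c.
Proof. intros Hb H. replace c with (c * b / b) by (field; lra). unfold Rdiv.
  apply Rmult_le_compat_r; [left; apply Rinv_0_lt_compat; lra|lra]. Qed.

Lemma ln_le' x y : 0 < x -> x <= y -> ln x <= ln y.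
Proof. intros Hx [H|H]; [left; apply ln_increasing; lra|subst; lra]. Qed.

Lemma cong_eq (x y M q : Z) : (Z.abs x <= M)%Z -> (Z.abs y <= M)%Z -> (2 * M < q)%Z ->
  (q | x - y)%Z -> x = y.
Proof.
  intros Hx Hy Hq [k Hk].
  assert (HM : (0 <= M)%Z) by lia.
  destruct (Z.eq_dec k 0) as [->|Hk0]; [lia|].
  assert (E : Z.abs (x - y) = (Z.abs k * q)%Z) by (rewrite Hk, Z.abs_mul; lia).
  assert (Z.abs k * q >= q)%Z by nia. lia.
Qed.

Lemma sep_const p (cen rad : nat -> R) :
  (forall k l, (k < 2 * p)%nat -> (l < 2 * p)%nat -> k <> l -> rad k + rad l < Rabs (cen k - cen l)) ->
  exists dl, 0 < dl /\ forall k l, (k < 2 * p)%nat -> (l < 2 * p)%nat -> k <> l ->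
     dl <= Rabs (cen k - cen l) - rad k - rad l.
Proof.
  intro Hs.
  set (g := fun k l => Rabs (cen k - cen l) - rad k - rad l).
  assert (Hg : forall k l, (k < 2 * p)%nat -> (l < 2 * p)%nat -> k <> l -> 0 < g k l).
  { intros k l Hk Hl Hkl. unfold g. assert (H := Hs k l Hk Hl Hkl). lra. }
  destruct (finite_max (2 * p) (fun k M => forall l, (l < 2 * p)%nat -> k <> l -> / g k l <= M))
    as [M HM].
  { intros k M M' H HM l Hl Hkl. eapply Rle_trans; [apply H; auto|exact HM]. }
  { intros k Hk. destruct (finite_max (2 * p) (fun l M => k <> l -> / g k l <= M)) as [M HM].
    - intros l M M' H HM Hkl. eapply Rle_trans; [apply H; auto|exact HM].
    - intros l Hl. exists (/ g k l). intros _. lra.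
    - exists M. intros l Hl Hkl. apply HM; auto. }
  exists (/ Rmax M 1). split.
  - apply Rinv_0_lt_compat. assert (H := Rmax_r M 1). lra.
  - intros k l Hk Hl Hkl. fold (g k l).
    assert (H0 := Hg k l Hk Hl Hkl). assert (H1 := HM k Hk l Hl Hkl).
    rewrite <- (Rinv_inv (g k l)). apply Rinv_le_contravar.
    + apply Rinv_0_lt_compat; lra.
    + eapply Rle_trans; [exact H1|apply Rmax_l].
Qed.

Lemma rad_const p (cen rad : nat -> R) :
  exists R1, 0 <= R1 /\ forall k, (k < 2 * p)%nat -> 2 * (Rabs (cen k) + rad k) <= R1.
Proof.
  destruct (finite_max (2 * p) (fun k M => 2 * (Rabs (cen k) + rad k) <= M)) as [M HM].
  - intros; lra.
  - intros k _. exists (2 * (Rabs (cen k) + rad k)). lra.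
  - exists (Rmax M 0). split; [apply Rmax_r|]. intros k Hk.
    eapply Rle_trans; [apply HM; auto|apply Rmax_l].
Qed.

Theorem corollary4p5 (p : nat) (gam : nat -> mat) (cen rad : nat -> R)
  (HS : schottky p gam cen rad) (C : R) (HC : 0 < C) :
  exists eps0 : R, 0 < eps0 /\ exists q0 : Z,
    forall (q : Z), prime q -> (q0 <= q)%Z ->
    forall h : R, 0 < h -> h <= 1 ->
    forall j : nat, (j < 2 * p)%nat ->
    forall z : Cx, in_disc cen rad j z ->
    forall n : nat, INR n <= eps0 * (ln (IZR q) + ln (/ h)) ->
    forall a b : list nat, is_word_j p n j a -> is_word_j p n j b ->
    mat_cong q (gword p gam a) (gword p gam b) ->
    Cdist (mobC (gword p gam a) z) (mobC (gword p gam b) z) <= C * h ->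
    a = b.
Proof.
  rename C into Cc.
  pose proof HS as (Hp2 & Hdet & Hrad & Hsep0 & Hmap).
  destruct (sep_const p cen rad Hsep0) as (dl & Hdl & Hsep).
  destruct (rad_const p cen rad) as (R1 & HR1 & HR).
  destruct (gen_bnd p gam) as (K & HK & Hg).
  set (B := IZR (2 * K)).
  assert (HB2 : 2 <= B) by (unfold B; apply IZR_le; lia).
  set (LB := ln B).
  assert (HLB : 0 < LB) by (unfold LB; rewrite <- ln_1; apply ln_increasing; lra).
  set (c1 := dl / (Cc * (R1 + 1) ^ 2)).
  assert (Hc1 : 0 < c1).
  { unfold c1. apply Rdiv_lt_0_compat; [exact Hdl|]. apply Rmult_lt_0_compat; [exact HC|].
    apply pow_lt. lra. }
  set (c2 := Rabs (ln c1)).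
  set (eps := / (4 * (LB + 1))).
  assert (He : 0 < eps) by (unfold eps; apply Rinv_0_lt_compat; lra).
  assert (He1 : eps * (4 * (LB + 1)) = 1) by (unfold eps; field; lra).
  exists eps. split; [exact He|].
  exists (up (exp (c2 + 2 * ln 2))).
  intros q Hq Hq0 h Hh Hh1 j Hj z Hz n Hn a b Ha Hb Hcong Hd.
  destruct (list_eq_dec Nat.eq_dec a b) as [E|Hab]; [exact E|]. exfalso.
  assert (Hlow := lower p gam cen rad HS dl R1 K Hdl Hsep HR1 HR HK Hg n j z Hj Hz a b Ha Hb Hab).
  fold B in Hlow. rewrite Cdist_eq in Hd.
  set (W := B ^ n) in *.
  assert (HW : 1 <= W) by (unfold W; apply pow_R1_Rle; lra).
  assert (Hc1h : c1 <= h * W ^ 2).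
  { assert (H1 : dl <= Cc * h * (W * (R1 + 1)) ^ 2).
    { apply div_le_mul; [apply pow_lt; nra|]. eapply Rle_trans; [exact Hlow|exact Hd]. }
    unfold c1. apply mul_le_div; [apply Rmult_lt_0_compat; [exact HC|apply pow_lt; lra]|].
    replace (h * W ^ 2 * (Cc * (R1 + 1) ^ 2)) with (Cc * h * (W * (R1 + 1)) ^ 2) by ring. exact H1. }
  assert (Hlnc1 : ln c1 <= ln h + 2 * INR n * LB).
  { eapply Rle_trans; [apply ln_le'; [exact Hc1|exact Hc1h]|].
    rewrite ln_mult by (try lra; apply pow_lt; lra).
    unfold W. rewrite <- pow_mult, ln_pow by lra. rewrite mult_INR. simpl (INR 2).
    unfold LB. lra. }
  destruct (archimed (exp (c2 + 2 * ln 2))) as [Hup _].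
  assert (Hqpos : exp (c2 + 2 * ln 2) < IZR q).
  { apply IZR_le in Hq0. lra. }
  assert (Hexp := exp_pos (c2 + 2 * ln 2)).
  assert (Hlnq : c2 + 2 * ln 2 < ln (IZR q)).
  { rewrite <- (ln_exp (c2 + 2 * ln 2)). apply ln_increasing; lra. }
  assert (Hln2 : 0 < ln 2) by (rewrite <- ln_1; apply ln_increasing; lra).
  assert (Hc2 : 0 <= c2) by apply Rabs_pos.
  assert (Hc2' : - ln c1 <= c2) by (unfold c2; rewrite <- Rabs_Ropp; apply Rle_abs).
  rewrite ln_Rinv in Hn by exact Hh.
  assert (Hn0 : 0 <= INR n) by apply pos_INR.
  set (Lq := ln (IZR q)) in *.
  assert (Hn2 : INR n * (4 * (LB + 1)) <= Lq + 2 * INR n * LB + c2).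
  { replace (Lq + 2 * INR n * LB + c2) with (eps * (Lq + 2 * INR n * LB + c2) * (4 * (LB + 1)))
      by (transitivity ((eps * (4 * (LB + 1))) * (Lq + 2 * INR n * LB + c2)); [ring|rewrite He1; ring]).
    apply Rmult_le_compat_r; [lra|]. nra. }
  assert (Hkey : INR n * LB < ln (IZR q / 2)).
  { unfold Rdiv. rewrite ln_mult, ln_Rinv by lra. fold Lq. nra. }
  assert (HWq : W < IZR q / 2).
  { unfold W. rewrite <- (exp_ln (B ^ n)) by (apply pow_lt; lra).
    rewrite <- (exp_ln (IZR q / 2)) by lra. apply exp_increasing.
    rewrite ln_pow by lra. exact Hkey. }
  assert (HWZ : (2 * (2 * K) ^ Z.of_nat n < q)%Z).
  { apply lt_IZR. rewrite mult_IZR, <- pow_IZR. fold B. fold W. lra. }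
  assert (Fa : List.Forall (fun k => (k < 2 * p)%nat) a) by (destruct Ha as [(_ & F & _) _]; exact F).
  assert (Fb : List.Forall (fun k => (k < 2 * p)%nat) b) by (destruct Hb as [(_ & F & _) _]; exact F).
  assert (La : length a = n) by (destruct Ha as [(L & _ & _) _]; exact L).
  assert (Lb : length b = n) by (destruct Hb as [(L & _ & _) _]; exact L).
  assert (BA := gword_bnd p gam K a HK Hg Fa). rewrite La in BA.
  assert (BB := gword_bnd p gam K b HK Hg Fb). rewrite Lb in BB.
  assert (Eq : gword p gam a = gword p gam b).
  { destruct (gword p gam a) as [a1 b1 c1' d1], (gword p gam b) as [a2 b2 c2' d2].
    destruct BA as (A1 & A2 & A3 & A4), BB as (B1 & B2 & B3 & B4).
    destruct Hcong as (K1 & K2 & K3 & K4). cbn [ma mb mc md] in *.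
    f_equal; eapply cong_eq; eassumption. }
  rewrite Eq in Hlow. set (u := mobC (gword p gam b) z) in Hlow.
  replace (u - u)%C with (RtoC 0) in Hlow by (apply injective_projections; simpl; ring).
  rewrite Cmod_0 in Hlow.
  assert (0 < dl / (W * (R1 + 1)) ^ 2).
  { apply Rdiv_lt_0_compat; [exact Hdl|]. apply pow_lt. nra. }
  lra.
Qed.
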